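(* Consider the finite-sum problem $\min_{\theta\in\mathbb{R}^n}\Psi(\theta)=\frac1N\sum_{i=1}^N\psi_i(\theta)$ and the following stochastic method (S2QN). Fix constants $0<r_1<r_2$, a positive sequence $\{\alpha_k\}$, and step sizes $\beta_k\equiv 1$. At iteration $k$, random index sets $\mathcal S_g^k\subseteq\{1,\dots,N\}$ are chosen, $g_k=\nabla_{\mathcal S_g^k}\Psi(\theta_k):=\frac{1}{|\mathcal S_g^k|}\sum_{i\in\mathcal S_g^k}\nabla\psi_i(\theta_k)$, a symmetric matrix $B_k=H_k+\Lambda_k$ is formed (base matrix $H_k$ plus quasi-Newton refinement matrix $\Lambda_k$), the regularization parameter is $$\lambda_k=\begin{cases}\frac{2r_1}{\|g_{k-1}\|+r_1}\alpha_k^{-1}, & \|g_{k-1}\|<r_1,\\ \frac{2\|g_{k-1}\|}{\|g_{k-1}\|+r_2}\alpha_k^{-1}, & \|g_{k-1}\|>r_2,\\ \alpha_k^{-1}, &\text{otherwise},\end{cases}$$ and $\theta_{k+1}=\theta_k+\beta_k d_k$ with $d_k=-(B_k+\lambda_kI)^{-1}g_k$. Let $\{\mathcal F_k\}$ be a filtration with $\theta_k$ being $\mathcal F_{k-1}$-measurable. Assume: (i) $\Psi$ is continuously differentiable on $\mathbb{R}^n$, bounded below by $\Psi_{\inf}$, and $\nabla\Psi$ is Lipschitz continuous on $\mathbb{R}^n$ with constant $L_\Psi\ge 1$; (ii) for every $k$, $B_k$ and $\nabla_{\mathcal S_g^k}\Psi(\theta_k)$ are conditionally independent given $\mathcal F_{k-1}$,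 and almost surely $\mathbb{E}[\nabla_{\mathcal S_g^k}\Psi(\theta_k)\mid\mathcal F_{k-1}]=\nabla\Psi(\theta_k)$; (iii) almost surely $\mathbb{E}[\|\nabla_{\mathcal S_g^k}\Psi(\theta_k)-\nabla\Psi(\theta_k)\|^2\mid\mathcal F_{k-1}]\le\sigma_k^2$; (iv) there is $h>0$ with $0\preceq B_k\preceq hI$ for all $k$. If $\alpha_k\le\frac{r_1}{4r_2(L_\Psi+h)}$ for all $k$, $\sum_k\alpha_k=\infty$ and $\sum_k\alpha_k\sigma_k^2<\infty$, then almost surely $\lim_{k\to\infty}\nabla\Psi(\theta_k)=0$.
   Context: $\psi_i:\mathbb{R}^n\to\mathbb{R}$ are component functions. The base matrix $H_k$ represents partial Hessian information (e.g. a subsampled Hessian or a Gauss–Newton/Fisher approximation) and $\Lambda_k$ is a quasi-Newton matrix built from previous iterates; the theorem only uses the properties (ii) and (iv) of $B_k=H_k+\Lambda_k$. $g_{k-1}$ denotes the stochastic gradient used at the previous iteration. *)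

(* Defs.v *)
From HB Require Import structures.
From mathcomp Require Import all_boot all_order all_algebra.
From mathcomp Require Import all_classical all_reals all_analysis.
Set Implicit Arguments. Unset Strict Implicit. Unset Printing Implicit Defensive.
Import Order.TTheory GRing.Theory Num.Theory.
Import numFieldNormedType.Exports.
Local Open Scope classical_set_scope.
Local Open Scope ring_scope.

Section Defs.
Context {R : realType}.

Definition enorm {n : nat} (v : 'cV[R]_n) : R := Num.sqrt (\sum_i v i 0 ^+ 2).

Definition grad {n : nat} (f : 'cV[R]_n -> R) (x : 'cV[R]_n) : 'cV[R]_n :=
  \col_i ('D_(delta_mx i 0) f x).

Definition symmetric_mx {n : nat} (B : 'M[R]_n) : Prop := B^T = B.
Definition psd_between {n : nat} (B : 'M[R]_n) (h : R) : Prop :=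
  forall v : 'cV[R]_n, 0 <= (v^T *m B *m v) 0 0 <= h * (v^T *m v) 0 0.

Definition reg_lambda (r1 r2 a ng : R) : R :=
  if ng < r1 then (2 * r1) / (ng + r1) * a^-1
  else if r2 < ng then (2 * ng) / (ng + r2) * a^-1
  else a^-1.
End Defs.

Section Prob.
Context {d : measure_display} {T : measurableType d} {R : realType}.
Variable P : probability T R.

Definition sub_sigma (G : set (set T)) : Prop :=
  sigma_algebra setT G /\ G `<=` measurable.

Definition filtration (F : nat -> set (set T)) : Prop :=
  (forall k, sub_sigma (F k)) /\ (forall k, F k `<=` F k.+1).

Definition meas_wrt (G : set (set T)) (X : T -> R) : Prop :=
  forall B : set R, measurable B -> G (X @^-1` B).

Definition mx_meas_wrt {p q : nat} (G : set (set T)) (X : T -> 'M[R]_(p, q)) : Prop :=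
  forall i j, meas_wrt G (fun w => X w i j).

Definition is_cond_exp (G : set (set T)) (X Y : T -> R) : Prop :=
  meas_wrt G Y /\
  P.-integrable setT (EFin \o X) /\ P.-integrable setT (EFin \o Y) /\
  forall A, G A -> (\int[P]_(w in A) (X w)%:E = \int[P]_(w in A) (Y w)%:E)%E.

Definition sigma_of {p q : nat} (X : T -> 'M[R]_(p, q)) : set (set T) :=
  <<s [set E | exists i j (B : set R), measurable B /\
                 E = (fun w => X w i j) @^-1` B] >>.

Definition cond_indep {p q p' q' : nat} (G : set (set T))
    (X : T -> 'M[R]_(p, q)) (Y : T -> 'M[R]_(p', q')) : Prop :=
  forall A C, sigma_of X A -> sigma_of Y C ->
  forall pA pC pAC,
    is_cond_exp G (\1_A) pA -> is_cond_exp G (\1_C) pC ->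
    is_cond_exp G (\1_(A `&` C)) pAC ->
    {ae P, forall w, pAC w = pA w * pC w}.
End Prob.

(* Main.v *)
Require Import Defs.
From HB Require Import structures.
From mathcomp Require Import all_boot all_order all_algebra.
From mathcomp Require Import all_classical all_reals all_analysis.
From mathcomp Require Import ring lra measurable_realfun.
Import Order.TTheory GRing.Theory Num.Theory.
Import numFieldNormedType.Exports.
Local Open Scope classical_set_scope.
Local Open Scope ring_scope.
Section LA.
Context {R : realType} {n : nat}.
Implicit Types (u v w : 'cV[R]_n) (A : 'M[R]_n).

Definition dot u v : R := (u^T *m v) 0 0.

Lemma dotE u v : dot u v = \sum_i u i 0 * v i 0.
Proof. by rewrite /dot mxE; apply: eq_bigr => i _; rewrite mxE. Qed.

Lemma dotC u v : dot u v = dot v u.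
Proof. by rewrite !dotE; apply: eq_bigr => i _; rewrite mulrC. Qed.

Lemma dotDl u v w : dot (u + v) w = dot u w + dot v w.
Proof. by rewrite !dotE -big_split; apply: eq_bigr => i _; rewrite mxE mulrDl. Qed.

Lemma dotDr u v w : dot w (u + v) = dot w u + dot w v.
Proof. by rewrite dotC dotDl !(dotC w). Qed.

Lemma dotZl (c : R) u v : dot (c *: u) v = c * dot u v.
Proof. by rewrite !dotE mulr_sumr; apply: eq_bigr => i _; rewrite mxE mulrA. Qed.

Lemma dotZr (c : R) u v : dot v (c *: u) = c * dot v u.
Proof. by rewrite dotC dotZl dotC. Qed.

Lemma dotNl u v : dot (- u) v = - dot u v.
Proof. by rewrite -scaleN1r dotZl mulN1r. Qed.

Lemma dotNr u v : dot v (- u) = - dot v u.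
Proof. by rewrite dotC dotNl dotC. Qed.

Lemma dotBl u v w : dot (u - v) w = dot u w - dot v w.
Proof. by rewrite dotDl dotNl. Qed.

Lemma dotBr u v w : dot w (u - v) = dot w u - dot w v.
Proof. by rewrite dotDr dotNr. Qed.

Lemma dot_ge0 u : 0 <= dot u u.
Proof. by rewrite dotE; apply: sumr_ge0 => i _; rewrite -expr2 sqr_ge0. Qed.

Lemma enormE u : enorm u = Num.sqrt (dot u u).
Proof. by rewrite /enorm dotE; congr Num.sqrt; apply: eq_bigr => i _; rewrite expr2. Qed.

Lemma enorm_ge0 u : 0 <= enorm u.
Proof. by rewrite /enorm sqrtr_ge0. Qed.

Lemma enorm_sq u : enorm u ^+ 2 = dot u u.
Proof. by rewrite enormE sqr_sqrtr // dot_ge0. Qed.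

Lemma quad_disc (a b c : R) : 0 <= c ->
  (forall t, 0 <= a + 2 * b * t + c * t ^+ 2) -> b ^+ 2 <= a * c.
Proof.
move=> c0 H.
have [cz|cp] := eqVneq c 0.
  have [bz|bn] := eqVneq b 0; first by rewrite bz cz; lra.
  exfalso; have := H (- (a + 1) / (2 * b)); rewrite cz mul0r addr0.
  have -> : 2 * b * (- (a + 1) / (2 * b)) = - (a + 1).
    by field.
  lra.
have cpos : 0 < c by rewrite lt_neqAle eq_sym cp c0.
have := H (- b / c).
have -> : a + 2 * b * (- b / c) + c * (- b / c) ^+ 2 = (a * c - b ^+ 2) / c.
  by field.
by rewrite pmulr_lge0 ?invr_gt0 // subr_ge0.
Qed.

Lemma CS2 u v : dot u v ^+ 2 <= dot u u * dot v v.
Proof.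
apply: quad_disc; first exact: dot_ge0.
move=> t; have := dot_ge0 (u + t *: v).
rewrite dotDl !dotDr !dotZl !dotZr (dotC v u).
suff -> : dot u u + t * dot u v + (t * dot u v + t * (t * dot v v)) =
   dot u u + 2 * dot u v * t + dot v v * t ^+ 2 by [].
ring.
Qed.

Lemma CS u v : `|dot u v| <= enorm u * enorm v.
Proof.
rewrite !enormE -sqrtrM ?dot_ge0 // -sqrtr_sqr.
by apply: ler_wsqrtr; exact: CS2.
Qed.

Lemma CSr u v : dot u v <= enorm u * enorm v.
Proof. exact: le_trans (ler_norm _) (CS u v). Qed.

Lemma le_sq_enorm (x y : R) : 0 <= y -> x ^+ 2 <= y ^+ 2 -> x <= y.
Proof.
move=> y0 h; apply: le_trans (ler_norm x) _.
by rewrite -sqrtr_sqr -[y](ger0_norm y0) -sqrtr_sqr; apply: ler_wsqrtr.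
Qed.

Lemma enormD u v : enorm (u + v) <= enorm u + enorm v.
Proof.
apply: le_sq_enorm; first by rewrite addr_ge0 // enorm_ge0.
rewrite enorm_sq dotDl !dotDr (dotC v u) -!enorm_sq.
have := CSr u v; lra.
Qed.

Lemma enormZ (c : R) u : enorm (c *: u) = `|c| * enorm u.
Proof.
rewrite !enormE dotZl dotZr mulrA -expr2 sqrtrM ?sqr_ge0 //.
by rewrite sqrtr_sqr.
Qed.

Lemma enormN u : enorm (- u) = enorm u.
Proof. by rewrite -scaleN1r enormZ normrN normr1 mul1r. Qed.

Lemma enormB_rev u v : `|enorm u - enorm v| <= enorm (u - v).
Proof.
have h1 : enorm u <= enorm (u - v) + enorm v.
  by have := enormD (u - v) v; rewrite subrK.
have h2 : enorm v <= enorm (u - v) + enorm u.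
  by have := enormD (v - u) u; rewrite subrK -(enormN (v - u)) opprB.
rewrite ler_norml; apply/andP; split; lra.
Qed.

Lemma entry_le_enorm u i : `|u i 0| <= enorm u.
Proof.
rewrite /enorm -sqrtr_sqr; apply: ler_wsqrtr.
rewrite (bigD1 i) //= lerDl; apply: sumr_ge0 => j _; exact: sqr_ge0.
Qed.

Lemma dot_mx u A v : (u^T *m A *m v) 0 0 = dot u (A *m v).
Proof. by rewrite /dot mulmxA. Qed.

Lemma dot_sym A u v : A^T = A -> dot u (A *m v) = dot (A *m u) v.
Proof.
move=> sA; rewrite /dot mulmxA trmx_mul sA //.
Qed.

End LA.
Section MX.
Context {R : realType} {n : nat}.
Implicit Types (u v w : 'cV[R]_n) (B : 'M[R]_n).

Lemma dot_eq0 u : dot u u = 0 -> u = 0.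
Proof.
rewrite dotE => /eqP; rewrite psumr_eq0 => [/allP H|i _]; last by rewrite -expr2 sqr_ge0.
apply/matrixP => i j; rewrite (ord1 j) mxE.
by have /= := H i (mem_index_enum _); rewrite -expr2 sqrf_eq0 => /eqP.
Qed.

Lemma psd_q {B} {h} v : psd_between B h -> 0 <= dot v (B *m v) <= h * dot v v.
Proof. by move=> /(_ v); rewrite dot_mx. Qed.

Lemma shift_mul B (l : R) u : (B + l%:M) *m u = B *m u + l *: u.
Proof. by rewrite mulmxDl mul_scalar_mx. Qed.

Lemma shift_unit {B h} {l : R} : psd_between B h -> 0 < l -> B + l%:M \in unitmx.
Proof.
move=> pB l0; rewrite unitmxE unitfE; apply/negP => /det0P [r rn0 rA].
have c0 : r^T = 0.
  apply: dot_eq0.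
  have : (r *m (B + l%:M) *m r^T) 0 0 = 0 by rewrite rA mul0mx mxE.
  rewrite -{1}(trmxK r) dot_mx shift_mul dotDr dotZr.
  have := psd_q r^T pB; move: (dot_ge0 r^T) => ?.
  move=> /andP [q0 _] h0.
  have : l * dot r^T r^T <= 0 by lra.
  by rewrite pmulr_rle0 // => hh; apply/eqP; rewrite eq_le hh dot_ge0.
by move: rn0; rewrite -(trmxK r) c0 trmx0 eqxx.
Qed.

Lemma formCS {B} {h} u : psd_between B h -> B^T = B -> 0 < h ->
  dot (B *m u) (B *m u) <= h * dot u (B *m u).
Proof.
move=> pB sB h0.
set w := B *m u; set s := dot w w; set q := dot u w.
have q0 : 0 <= q by have /andP[] := psd_q u pB.
have s0 : 0 <= s by exact: dot_ge0.
have /andP [r0 rh] := psd_q w pB.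
have key : s ^+ 2 <= q * dot w (B *m w).
  apply: quad_disc => // t.
  have /andP [+ _] := psd_q (u + t *: w) pB.
  rewrite mulmxDr -scalemxAr !dotDl !dotDr !dotZl !dotZr.
  have -> : dot u (B *m w) = s by rewrite dot_sym.
  rewrite -/w -/q.
  suff -> : q + t * s + (t * dot w w + t * (t * dot w (B *m w))) =
     q + 2 * s * t + dot w (B *m w) * t ^+ 2 by [].
  rewrite -/s; ring.
have [sz|sp] := eqVneq s 0; first by rewrite sz mulr_ge0 // ltW.
have spos : 0 < s by rewrite lt_neqAle eq_sym sp s0.
have : s ^+ 2 <= q * (h * s).
  apply: le_trans key _; apply: ler_wpM2l => //.
have -> : q * (h * s) = (h * q) * s by ring.
by rewrite expr2 ler_pM2r.
Qed.

Lemma resolvent {B h} {l : R} v : psd_between B h -> B^T = B -> 0 < h -> 0 < l ->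
  let u := invmx (B + l%:M) *m v in
  [/\ l * dot u u <= dot u v, l * enorm u <= enorm v &
      dot v v <= (h + 2 * l) * dot u v].
Proof.
move=> pB sB h0 l0 u.
have Au : B *m u + l *: u = v.
  by rewrite -shift_mul /u mulKVmx // (shift_unit pB l0).
have /andP [q0 qh] := psd_q u pB.
have hv : dot u v = dot u (B *m u) + l * dot u u.
  by rewrite -Au dotDr dotZr.
have h1 : l * dot u u <= dot u v by rewrite hv; lra.
split => //.
- have cs := CSr u v.
  have [uz|up] := eqVneq (enorm u) 0.
    by rewrite uz mulr0 enorm_ge0.
  have upos : 0 < enorm u by rewrite lt_neqAle eq_sym up enorm_ge0.
  have : (l * enorm u) * enorm u <= enorm v * enorm u.
    rewrite -mulrA -expr2 enorm_sq (mulrC (enorm v)); lra.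
  by rewrite ler_pM2r.
- have fc := formCS u pB sB h0.
  have ev : dot v v = dot (B *m u) (B *m u) + 2 * l * dot u (B *m u)
     + l ^+ 2 * dot u u.
    rewrite -Au !dotDl !dotDr !dotZl !dotZr (dotC u (B *m u)); ring.
  rewrite ev hv.
  have uu0 := dot_ge0 u.
  have : l ^+ 2 * dot u u <= (h + 2 * l) * (l * dot u u).
    rewrite mulrA; apply: ler_wpM2r => //; rewrite expr2 mulrDl; nra.
  nra.
Qed.

End MX.
Section Descent.
Context {R : realType} {n : nat}.
Implicit Types (x d : 'cV[R]_n) (f : 'cV[R]_n -> R).

Lemma Dgrad f x d : differentiable f x -> 'D_d f x = dot (grad f x) d.
Proof.
move=> df; rewrite deriveE // dotE.
rewrite {1}(matrix_sum_delta d) linear_sum; apply: eq_bigr => i _.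
rewrite big_ord1 linearZ /= -deriveE // /grad mxE /=.
by rewrite (ord1 (ord0 : 'I_1)) mulrC.
Qed.

Definition phi f x d (t : R) : R := f (x + t *: d).

Lemma phi_shift f x d t :
  (fun h : R => h^-1 *: ((phi f x d \o shift t) (h *: 1) - phi f x d t)) =
  (fun h : R => h^-1 *: ((f \o shift (x + t *: d)) (h *: d) - f (x + t *: d))).
Proof.
apply: funext => h; rewrite /phi /= /shift /=.
by rewrite -[h *: 1]/(h * 1) mulr1 scalerDl addrCA addrC.
Qed.

Lemma phi_derivable f x d t : differentiable f (x + t *: d) ->
  derivable (phi f x d) t 1 /\ 'D_1 (phi f x d) t = 'D_d f (x + t *: d).
Proof.
move=> df; have dd : derivable f (x + t *: d) d.
  exact: diff_derivable.
by rewrite /derivable /derive phi_shift; split.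
Qed.

Lemma descent {f} {L : R} : (forall x, differentiable f x) ->
  (forall x y, enorm (grad f x - grad f y) <= L * enorm (x - y)) -> 0 <= L ->
  forall x d, f (x + d) <= f x + dot (grad f x) d + L * enorm d ^+ 2.
Proof.
move=> df lip L0 x d.
have hd (t : R) : is_derive t 1 (phi f x d) (dot (grad f (x + t *: d)) d).
  have [h1 h2] := phi_derivable f x d t (df _).
  by apply: DeriveDef => //; rewrite h2 Dgrad.
have cont : {within `[0, 1], continuous (phi f x d)}.
  apply: derivable_within_continuous => t _.
  exact: (phi_derivable f x d t (df _)).1.
have [c cI eq] := MVT ltr01 (fun t _ => hd t) cont.
move: cI; rewrite in_itv /= => /andP [c0 c1].
move: eq; rewrite /phi scale0r addr0 scale1r subr0 mulr1 => eq.
have -> : f (x + d) = f x + dot (grad f (x + c *: d)) d by rewrite -eq; ring.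
rewrite -addrA lerD2l.
have -> : dot (grad f (x + c *: d)) d =
   dot (grad f x) d + dot (grad f (x + c *: d) - grad f x) d by rewrite dotBl; ring.
rewrite lerD2l.
apply: le_trans (CSr _ _) _.
have lp := lip (x + c *: d) x.
rewrite addrAC subrr add0r enormZ ger0_norm in lp; last first.
  exact: ltW.
have e0 := enorm_ge0 d.
have g0 := enorm_ge0 (grad f (x + c *: d) - grad f x).
rewrite expr2.
apply: le_trans (ler_wpM2r e0 lp) _.
have h3 : 0 <= L * (enorm d * enorm d) by rewrite mulr_ge0 // mulr_ge0.
have -> : L * (c * enorm d) * enorm d = c * (L * (enorm d * enorm d)) by ring.
by rewrite ler_piMl // ltW.
Qed.
End Descent.
Section Step.
Context {R : realType} {n : nat}.

Lemma step_ineq (f : 'cV[R]_n -> R) (L h a l : R) (B : 'M[R]_n) (x g : 'cV[R]_n) :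
  (forall x, differentiable f x) ->
  (forall x y, enorm (grad f x - grad f y) <= L * enorm (x - y)) -> 0 <= L ->
  L * a <= 1/4 -> a * h <= 1/4 -> 0 < h -> 0 < a -> 1 <= l * a -> l * a <= 2 ->
  psd_between B h -> B^T = B ->
  let y := x - invmx (B + l%:M) *m g in
  f y <= f x - a / 20 * enorm (grad f x) ^+ 2 + 6 * a * enorm (g - grad f x) ^+ 2
  /\ enorm (y - x) <= a * (enorm (grad f x) + enorm (g - grad f x)).
Proof.
move=> df lip L0 La ah h0 a0 la1 la2 pB sB y.
have l0 : 0 < l.
  have : 0 < l * a by lra.
  by rewrite pmulr_lgt0.
set G := grad f x; set e := g - G.
set M := invmx (B + l%:M).
have gGe : g = G + e by rewrite /e addrC subrK.
have Gn0 := enorm_ge0 G; have En0 := enorm_ge0 e.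
split; last first.
  rewrite /y addrAC subrr add0r enormN.
  have [_ r2 _] := resolvent g pB sB h0 l0; rewrite -/M in r2.
  have := enormD G e; rewrite -gGe => tri.
  have m0 := enorm_ge0 (M *m g).
  have : a * (l * enorm (M *m g)) <= a * enorm g by rewrite ler_wpM2l // ltW.
  have : a * enorm g <= a * (enorm G + enorm e) by rewrite ler_wpM2l // ltW.
  have : enorm (M *m g) <= l * a * enorm (M *m g) by rewrite ler_peMl.
  rewrite -/M => h1 h2 h3; apply: (le_trans h1).
  rewrite (mulrC l) -mulrA; exact: le_trans h3 h2.
set u := M *m G; set w := M *m e.
have Mg : M *m g = u + w by rewrite gGe mulmxDr.
have dsc := descent df lip L0 x (- (M *m g)).
rewrite /y -[x - _]/(x + - (M *m g)).
apply: le_trans dsc _.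
rewrite Mg dotNr dotDr enormN.
have [r1 _ r3] := resolvent G pB sB h0 l0; rewrite -/M -/u in r1 r3.
have [_ r2 _] := resolvent e pB sB h0 l0; rewrite -/M -/w in r2.
have cs := CS G w.
have hS : enorm (u + w) ^+ 2 <= 2 * dot u u + 2 * enorm w ^+ 2.
  rewrite enorm_sq enorm_sq dotDl !dotDr (dotC w u).
  have := dot_ge0 (u - w); rewrite dotBl !dotBr (dotC w u); lra.
rewrite (dotC u G) in r1 r3.
set p := dot G u in r1 r3 *.
set U := dot u u in r1 hS *.
set W := enorm w in r2 hS *.
set Gn := enorm G in r3 *.
set En := enorm e in r2 *.
rewrite -enorm_sq -/Gn in r3.
have U0 : 0 <= U by exact: dot_ge0.
have W0 : 0 <= W by exact: enorm_ge0.
have p0 : 0 <= p by apply: le_trans r1; rewrite mulr_ge0 // ltW.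
have hU : U <= a * p.
  have : U <= l * a * U by rewrite ler_peMl.
  have : a * (l * U) <= a * p by rewrite ler_wpM2l // ltW.
  nra.
have hW : W <= a * En.
  have : W <= l * a * W by rewrite ler_peMl.
  have : a * (l * W) <= a * En by rewrite ler_wpM2l // ltW.
  nra.
have hG : a * Gn ^+ 2 <= 17 / 4 * p.
  have : a * Gn ^+ 2 <= a * ((h + 2 * l) * p) by rewrite ler_wpM2l // ltW.
  have : (a * (h + 2 * l)) * p <= 17 / 4 * p by apply: ler_wpM2r => //; lra.
  nra.
have hdot : - dot G w <= Gn * W.
  by apply: le_trans (ler_norm _) _; rewrite normrN; exact: cs.
have e1 : 2 * L * U <= p / 2.
  have : 2 * L * U <= 2 * L * (a * p) by apply: ler_wpM2l; [lra | exact: hU].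
  have : 2 * (L * a) * p <= 2 * (1/4) * p by apply: ler_wpM2r => //; lra.
  lra.
have e2 : Gn * W <= a * (Gn ^+ 2 / 20 + 5 * En ^+ 2).
  have : Gn * W <= Gn * (a * En) by apply: ler_wpM2l.
  have : 0 <= a * (Gn - 10 * En) ^+ 2 by rewrite mulr_ge0 ?sqr_ge0 // ltW.
  lra.
have e3 : 2 * L * W ^+ 2 <= a / 2 * En ^+ 2.
  have aE0 : 0 <= a * En by apply: mulr_ge0 => //; lra.
  have h0' : W ^+ 2 <= (a * En) ^+ 2.
    by rewrite !expr2; apply: ler_pM.
  have h2 : 2 * L * W ^+ 2 <= 2 * L * (a * En) ^+ 2.
    by apply: ler_wpM2l => //; lra.
  have h1 : 2 * (L * a) * (a * En ^+ 2) <= 2 * (1/4) * (a * En ^+ 2).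
    apply: ler_wpM2r; first by apply: mulr_ge0; [lra | exact: sqr_ge0].
    lra.
  rewrite exprMn in h2; lra.
have eL : L * enorm (u + w) ^+ 2 <= 2 * L * U + 2 * L * W ^+ 2.
  have := ler_wpM2l L0 hS; lra.
rewrite -/G.
have : 0 <= a * En ^+ 2 by apply: mulr_ge0; [lra | exact: sqr_ge0].
have : 0 <= a * Gn ^+ 2 by apply: mulr_ge0; [lra | exact: sqr_ge0].
lra.
Qed.

End Step.
Section DSeq.
Context {R : realType}.
Implicit Types (a x y V : nat -> R).

Lemma psum_mono (F : nat -> R) k m : (forall i, 0 <= F i) -> (k <= m)%N ->
  \sum_(0 <= i < k) F i <= \sum_(0 <= i < m) F i.
Proof.
move=> F0 km; rewrite (big_cat_nat (leq0n k) km) /= lerDl.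
by apply: sumr_ge0 => i _.
Qed.

Lemma var_bound x (d : nat -> R) k m :
  (forall i, x i.+1 <= x i + d i) -> (k <= m)%N ->
  x m <= x k + \sum_(k <= i < m) d i.
Proof.
move=> H; elim: m => [|m IH].
  by rewrite leqn0 => /eqP ->; rewrite big_geq // addr0.
rewrite leq_eqVlt => /orP [/eqP ->|km]; first by rewrite big_geq // addr0.
rewrite big_nat_recr //=; apply: le_trans (H m) _.
by rewrite addrA lerD2r IH.
Qed.

Lemma seq_conv a x y V (c C D : R) :
  (forall k, 0 < a k) -> (forall k, 0 <= x k) -> (forall k, 0 <= y k) ->
  (forall k, 0 <= V k) -> 0 < c -> 0 <= C -> 0 <= D ->
  (forall k, V k.+1 <= V k - c * a k * x k + C * a k * y k) ->
  (forall k, x k.+1 <= x k + D * a k * (x k + y k)) ->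
  (forall M, exists m, M < \sum_(0 <= k < m) a k) ->
  (exists Y, forall m, \sum_(0 <= k < m) a k * y k <= Y) ->
  forall eps, 0 < eps -> exists K, forall m, (K <= m)%N -> x m < eps.
Proof.
move=> a0 x0 y0 V0 c0 C0 D0 hV hx hdiv [Y hY] eps e0.
have ax0 k : 0 <= a k * x k by rewrite mulr_ge0 // ltW.
have ay0 k : 0 <= a k * y k by rewrite mulr_ge0 // ltW.
have tele m : V m <= V 0%N - c * \sum_(0 <= k < m) a k * x k
                    + C * \sum_(0 <= k < m) a k * y k.
  elim: m => [|m IH]; first by rewrite !big_geq // !mulr0 subr0 addr0.
  rewrite !big_nat_recr //=; apply: le_trans (hV m) _.
  rewrite !mulrDr; lra.
set X := (V 0%N + C * Y) / c.
have hX m : \sum_(0 <= k < m) a k * x k <= X.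
  rewrite /X ler_pdivlMr // mulrC.
  have := tele m; have := V0 m; have := ler_wpM2l C0 (hY m); lra.
set d := fun k => D * a k * (x k + y k).
have d0 k : 0 <= d k.
  by rewrite /d mulr_ge0 ?mulr_ge0 ?addr_ge0 // ltW.
set S := fun m => \sum_(0 <= k < m) d k.
have hS m : S m <= D * (X + Y).
  rewrite /S /d.
  have -> : \sum_(0 <= k < m) D * a k * (x k + y k) =
     D * (\sum_(0 <= k < m) a k * x k + \sum_(0 <= k < m) a k * y k).
    rewrite -big_split mulr_sumr /=; apply: eq_bigr => k _; ring.
  by apply: ler_wpM2l => //; apply: lerD.
have Smono k m : (k <= m)%N -> S k <= S m by move=> km; exact: psum_mono.
have Sdiff k m : (k <= m)%N -> \sum_(k <= i < m) d i = S m - S k.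
  move=> km; rewrite /S (big_cat_nat (leq0n k) km) /=; ring.
have hsup : has_sup (range S).
  split; first by exists (S 0%N), 0%N.
  by exists (D * (X + Y)) => _ [m _ <-].
have e2 : 0 < eps / 2 by rewrite divr_gt0.
have [_ [K _ <-] hK] := sup_adherent e2 hsup.
have tailS m : (K <= m)%N -> S m - S K < eps / 2.
  move=> Km; have : S m <= sup (range S) by apply: sup_upper_bound => //; exists m.
  lra.
have [[k [Kk xk]]|nok] := pselect (exists k, (K <= k)%N /\ x k < eps / 2).
  exists k => m km.
  have hx' i : x i.+1 <= x i + d i := hx i.
  have := var_bound x d k m hx' km; rewrite Sdiff // => hm.
  have := tailS m (leq_trans Kk km); have := Smono _ _ Kk; lra.
exfalso.
have big k : (K <= k)%N -> eps / 2 <= x k.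
  move=> Kk; rewrite leNgt; apply/negP => lt; apply: nok; exists k; split => //.
have [m hm] := hdiv (\sum_(0 <= k < K) a k + 2 * X / eps + 1).
set m' := maxn m K.
have hm' : \sum_(0 <= k < m) a k <= \sum_(0 <= k < m') a k.
  by apply: psum_mono; [move=> i; exact: ltW | exact: leq_maxl].
have Km' : (K <= m')%N by exact: leq_maxr.
have split : \sum_(0 <= k < m') a k = \sum_(0 <= k < K) a k + \sum_(K <= k < m') a k.
  by rewrite (big_cat_nat (leq0n K) Km').
have low : eps / 2 * \sum_(K <= k < m') a k <= \sum_(K <= k < m') a k * x k.
  rewrite mulr_sumr big_nat_cond [X in _ <= X]big_nat_cond.
  apply: ler_sum => i /andP [/andP [Ki _] _].
  by rewrite mulrC ler_wpM2l ?big // ltW.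
have up : \sum_(K <= k < m') a k * x k <= X.
  apply: le_trans (hX m').
  rewrite (big_cat_nat (leq0n K) Km') /= lerDr.
  by apply: sumr_ge0.
have : \sum_(K <= k < m') a k > 2 * X / eps.
  move: split hm hm' => ->; lra.
move=> gt.
have : eps / 2 * (2 * X / eps) < eps / 2 * \sum_(K <= k < m') a k.
  by rewrite ltr_pM2l.
have -> : eps / 2 * (2 * X / eps) = X by field; lra.
lra.
Qed.

End DSeq.
Section ProbPart.
Context {d : measure_display} {T : measurableType d} {R : realType}.
Variable P : probability T R.
Local Open Scope ereal_scope.

Lemma sub_sigmaT (G : set (set T)) : sub_sigma G -> G setT.
Proof.
move=> [[G0 GC _] _]; have := GC _ G0; by rewrite setD0.
Qed.

Lemma int_cond_le (G : set (set T)) (X Z : T -> R) (s : R) :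
  G setT -> (0 <= s)%R -> is_cond_exp P G X Z -> {ae P, forall w, (Z w <= s)%R} ->
  \int[P]_(w in setT) (X w)%:E <= s%:E.
Proof.
move=> GT s0 [_ [iX [iZ hint]]] hae.
rewrite hint // integralE.
have mZ : measurable_fun [set: T] (fun w => (Z w)%:E : \bar R) by case/integrableP: iZ.
have -> : s%:E = s%:E - 0 by rewrite sube0.
apply: leeB; last by apply: integral_ge0 => w _; exact: funeneg_ge0.
apply: (@le_trans _ _ (\int[P]_(w in setT) (cst s%:E w))); last first.
  rewrite integral_cst //.
  rewrite [X in (_ * X)%E](_ : _ = 1%E) ?mule1 //; exact: probability_setT.
have f10 : forall w, [set: T] w -> 0 <= (fun w => (Z w)%:E)^\+ w.
  by move=> w Tw; exact: funepos_ge0.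
have mf1 : measurable_fun [set: T] (fun w => (Z w)%:E)^\+.
  exact: measurable_funepos.
have f20 : forall w, [set: T] w -> 0 <= cst s%:E w.
  by move=> w Tw; rewrite lee_fin.
apply: (ae_ge0_le_integral measurableT f10 mf1 f20 (measurable_cst _)).
apply: filterS hae => w hw Tw.
rewrite funeposE /cst.
by rewrite ge_max !lee_fin hw s0.
Qed.

Lemma ae_summable (a s2 : nat -> R) (X : nat -> T -> R) (F : nat -> set (set T)) :
  (forall k, 0 < a k)%R -> (forall k w, 0 <= X k w)%R -> (forall k, 0 <= s2 k)%R ->
  (forall k, F k setT) ->
  (forall k, exists Z, is_cond_exp P (F k) (X k) Z /\ {ae P, forall w, (Z w <= s2 k)%R}) ->
  \sum_(0 <= k <oo) (a k * s2 k)%:E < +oo ->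
  {ae P, forall w, exists Y : R, forall m, (\sum_(0 <= k < m) a k * X k w <= Y)%R}.
Proof.
move=> a0 X0 s0 FT hce hsum.
set f := fun k w => (a k * X k w)%:E.
have f0 k w : 0 <= f k w by rewrite lee_fin mulr_ge0 // ltW.
have mX k : measurable_fun [set: T] (fun w => (X k w)%:E : \bar R).
  by have [Z [[_ [iX _]] _]] := hce k; case/integrableP: iX.
have mf k : measurable_fun setT (f k).
  have -> : f k = (fun w => (a k)%:E * (EFin \o X k) w).
    by apply: funext => w; rewrite /f EFinM.
  exact: (measurable_funeM _ (mX k)).
have intf k : \int[P]_(w in setT) f k w <= (a k * s2 k)%:E.
  have [Z [ce hae]] := hce k.
  have -> : \int[P]_(w in setT) f k w = (a k)%:E * \int[P]_(w in setT) (X k w)%:E.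
    have -> : \int[P]_(w in setT) f k w =
              \int[P]_(w in setT) ((a k)%:E * (X k w)%:E).
      by apply: eq_integral => w Tw; rewrite /f EFinM.
    by rewrite ge0_integralZl_EFin //; [move=> w Tw; rewrite lee_fin | exact: ltW].
  rewrite EFinM lee_pmul2l ?lte_fin //.
  exact: int_cond_le ce hae.
set Sf := fun w => \sum_(0 <= k <oo) f k w.
have mSf : measurable_fun setT Sf.
  exact: (ge0_emeasurable_sum (P := xpredT)).
have iSf : P.-integrable setT Sf.
  apply/integrableP; split => //.
  have -> : \int[P]_(w in setT) `|Sf w| = \int[P]_(w in setT) Sf w.
    by apply: eq_integral => w _; rewrite gee0_abs // nneseries_ge0.
  rewrite /Sf integral_nneseries //.
  apply: le_lt_trans hsum; apply: lee_nneseries.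
  - by move=> k _ _; apply: integral_ge0 => w Tw.
  - by move=> k _; exact: intf.
have hae := integrable_ae measurableT iSf.
apply: filterS hae => w fin.
have fw : Sf w \is a fin_num by exact: fin.
exists (fine (Sf w)) => m.
rewrite -lee_fin fineK // -sumEFin.
by apply: (@nneseries_lim_ge _ (fun i => f i w) xpredT 0%N m) => i _ _; exact: f0.
Qed.

End ProbPart.
Section Misc.
Context {R : realType}.

Lemma lam_bounds (r1 r2 a ng : R) : 0 < r1 -> r1 < r2 -> 0 < a -> 0 <= ng ->
  1 <= reg_lambda r1 r2 a ng * a /\ reg_lambda r1 r2 a ng * a <= 2.
Proof.
move=> r10 r12 a0 ng0; rewrite /reg_lambda.
have an : a^-1 * a = 1 by rewrite mulVf // gt_eqF.
case: ifP => h1.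
  rewrite -mulrA an mulr1.
  have p : 0 < ng + r1 by lra.
  by rewrite ler_pdivlMr // ler_pdivrMr //; split; lra.
case: ifP => h2.
  rewrite -mulrA an mulr1.
  have p : 0 < ng + r2 by lra.
  by rewrite ler_pdivlMr // ler_pdivrMr //; split; lra.
by rewrite an; split; lra.
Qed.

Lemma div_series (a : nat -> R) : (forall k, 0 <= a k) ->
  (\sum_(0 <= k <oo) (a k)%:E = +oo)%E ->
  forall M, exists m, M < \sum_(0 <= k < m) a k.
Proof.
move=> a0 hs M; apply: contrapT => hn.
have hle m : \sum_(0 <= k < m) a k <= M.
  by rewrite leNgt; apply/negP => hlt; apply: hn; exists m.
have : (\sum_(0 <= k <oo) (a k)%:E <= M%:E)%E.
  apply: lime_le.
    by apply: is_cvg_nneseries => k _ _; rewrite lee_fin.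
  by apply: nearW => m; rewrite sumEFin lee_fin.
by rewrite hs leye_eq.
Qed.

Lemma mxnorm_le_enorm {n : nat} (v : 'cV[R]_n) : `|v| <= enorm v.
Proof.
have -> : `|v| = mx_norm v by [].
have [z|nz] := eqVneq (mx_norm v) 0.
  by rewrite z enorm_ge0.
have [[i j] ->] := mx_norm_neq0 nz.
by rewrite /= (ord1 j); exact: entry_le_enorm.
Qed.

End Misc.
Section Misc2.
Context {R : realType}.

Lemma lt_sq (x y : R) : 0 <= x -> 0 <= y -> x ^+ 2 < y ^+ 2 -> x < y.
Proof.
move=> x0 y0 h; rewrite ltNge; apply/negP => yx.
have : y ^+ 2 <= x ^+ 2 by rewrite !expr2; apply: ler_pM.
by rewrite leNgt h.
Qed.

Lemma sq_var (u u' s q : R) : 0 <= u -> 0 <= u' -> 0 <= s -> 0 <= q -> q <= 1/4 ->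
  u' <= u + q * (u + s) -> u' ^+ 2 <= u ^+ 2 + 6 * q * (u ^+ 2 + s ^+ 2).
Proof.
move=> u0 u'0 s0 q0 q4 h.
set t := q * (u + s).
have t0 : 0 <= t by rewrite mulr_ge0 // addr_ge0.
have h1 : u' ^+ 2 <= (u + t) ^+ 2 by rewrite !expr2; apply: ler_pM.
have h2 : 0 <= (u - s) ^+ 2 by exact: sqr_ge0.
have h3 : t ^+ 2 <= q * (1/4) * (u + s) ^+ 2.
  rewrite /t exprMn; apply: ler_wpM2r; first exact: sqr_ge0.
  rewrite expr2; apply: ler_wpM2l => //.
have h4 : 0 <= q * (u - s) ^+ 2 by rewrite mulr_ge0.
have h5 : 0 <= q * u ^+ 2 by rewrite mulr_ge0 // sqr_ge0.
have h6 : 0 <= q * s ^+ 2 by rewrite mulr_ge0 // sqr_ge0.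
rewrite /t in h1 h3.
nra.
Qed.

End Misc2.
Theorem theorem1
  (d : measure_display) (T : measurableType d) (R : realType)
  (P : probability T R) (n N : nat)
  (psi : 'I_N -> 'cV[R]_n -> R)
  (r1 r2 LPsi h : R) (alpha sigma : nat -> R)
  (F : nat -> set (set T))          (* F k stands for the paper's F_{k-1} *)
  (S : nat -> T -> {set 'I_N})      (* random index sets S_g^k *)
  (theta : nat -> T -> 'cV[R]_n)
  (g : nat -> T -> 'cV[R]_n)        (* stochastic gradients g_k *)
  (g_init : T -> 'cV[R]_n)          (* the "g_{-1}" used to form lambda_0 *)
  (H Lam : nat -> T -> 'M[R]_n)
  (lambda : nat -> T -> R) :
  let Psi := fun x => N%:R^-1 * \sum_(i < N) psi i x in
  let B := fun k w => H k w + Lam k w in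
  (0 < N)%N ->
  0 < r1 -> r1 < r2 ->
  (forall k, 0 < alpha k) ->
  (forall k, 0 <= sigma k) ->
  (* the ψ_i are differentiable, so that ∇ψ_i makes sense *)
  (forall i x, differentiable (psi i) x) ->
  (* the method S2QN, with beta_k = 1 *)
  (forall k w, (0 < #|S k w|)%N) ->
  (forall k w, g k w = #|S k w|%:R^-1 *: \sum_(i in S k w) grad (psi i) (theta k w)) ->
  (forall k w, symmetric_mx (B k w)) ->
  (forall k w, lambda k w =
     reg_lambda r1 r2 (alpha k)
       (enorm (if k is k'.+1 then g k' w else g_init w))) ->
  (forall k w, theta k.+1 w =
     theta k w - invmx (B k w + (lambda k w)%:M) *m g k w) ->
  (* filtration: theta_k is F_{k-1}-measurable; g_k, B_k (and g_{-1}) adapted *)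
  filtration F ->
  (forall k, mx_meas_wrt (F k) (theta k)) ->
  (forall k, mx_meas_wrt (F k.+1) (g k)) ->
  (forall k, mx_meas_wrt (F k.+1) (B k)) ->
  mx_meas_wrt (F 0%N) g_init ->
  (* (i) *)
  (forall x, differentiable Psi x) -> continuous (grad Psi) ->
  (exists Psi_inf : R, forall x, Psi_inf <= Psi x) ->
  1 <= LPsi ->
  (forall x y, enorm (grad Psi x - grad Psi y) <= LPsi * enorm (x - y)) ->
  (* (ii) *)
  (forall k, cond_indep P (F k) (B k) (g k)) ->
  (forall k (i : 'I_n), exists Z, is_cond_exp P (F k) (fun w => g k w i 0) Z /\
       {ae P, forall w, Z w = grad Psi (theta k w) i 0}) ->
  (* (iii) *)
  (forall k, exists Z,
       is_cond_exp P (F k) (fun w => enorm (g k w - grad Psi (theta k w)) ^+ 2) Z /\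
       {ae P, forall w, Z w <= sigma k ^+ 2}) ->
  (* (iv) *)
  0 < h ->
  (forall k w, psd_between (B k w) h) ->
  (* step-size conditions *)
  (forall k, alpha k <= r1 / (4 * r2 * (LPsi + h))) ->
  (\sum_(0 <= k <oo) (alpha k)%:E = +oo)%E ->
  (\sum_(0 <= k <oo) (alpha k * sigma k ^+ 2)%:E < +oo)%E ->
  {ae P, forall w, (fun k => grad Psi (theta k w)) @ \oo --> (0 : 'cV[R]_n)}.
Proof.
move=> Psi B N0 r10 r12 a0 s0 dpsi Spos gdef symB lamdef thdef filt mth mg mB mginit
  dPsi cgrad [Pinf hinf] L1 lip cind unb var h0 psdB asmall adiv asum.
have L0 : 0 <= LPsi by lra.
have smallk k : LPsi * alpha k <= 1/4 /\ alpha k * h <= 1/4.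
  have p : 0 < 4 * r2 * (LPsi + h) by rewrite mulr_gt0 ?mulr_gt0 //; lra.
  have := asmall k; rewrite ler_pdivlMr // => hk.
  have ak := a0 k.
  have : alpha k * (4 * (LPsi + h)) * r2 <= r2.
    have -> : alpha k * (4 * (LPsi + h)) * r2 = alpha k * (4 * r2 * (LPsi + h)) by ring.
    lra.
  rewrite ger_pMl; last lra.
  move=> hh; split; nra.
have FT k : F k setT by apply: sub_sigmaT; exact: filt.1.
have hae := ae_summable P alpha (fun k => sigma k ^+ 2)
  (fun k w => enorm (g k w - grad Psi (theta k w)) ^+ 2) F a0 (fun k w => sqr_ge0 _) (fun k => sqr_ge0 (sigma k)) FT var asum.
apply: filterS hae => w [Y hY].
apply/cvgrPdist_lt => eps e0.
have hdiv := div_series alpha (fun k => ltW (a0 k)) adiv.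
have hl k : 1 <= lambda k w * alpha k /\ lambda k w * alpha k <= 2.
  by rewrite lamdef; apply: lam_bounds => //; exact: enorm_ge0.
set Gk := fun k => grad Psi (theta k w).
set Ek := fun k => g k w - grad Psi (theta k w).
have hstep k : Psi (theta k.+1 w) <= Psi (theta k w) - alpha k / 20 * enorm (Gk k) ^+ 2
      + 6 * alpha k * enorm (Ek k) ^+ 2
    /\ enorm (theta k.+1 w - theta k w) <= alpha k * (enorm (Gk k) + enorm (Ek k)).
  have := step_ineq Psi LPsi h (alpha k) (lambda k w) (B k w) (theta k w) (g k w)
   dPsi lip L0 (smallk k).1 (smallk k).2 h0 (a0 k) (hl k).1 (hl k).2 (psdB k w) (symB k w).
  by rewrite /= -thdef.
have sc := @seq_conv R alpha (fun k => enorm (Gk k) ^+ 2) (fun k => enorm (Ek k) ^+ 2)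
  (fun k => Psi (theta k w) - Pinf) (1/20) 6 (6 * LPsi).
have [K hK] : exists K, forall m, (K <= m)%N -> enorm (Gk m) ^+ 2 < eps ^+ 2.
  apply: sc => //.
  - by move=> k; exact: sqr_ge0.
  - by move=> k; exact: sqr_ge0.
  - by move=> k; rewrite subr_ge0.
  - lra.
  - move=> k; have [h1 _] := hstep k; lra.
  - move=> k; have [_ h2] := hstep k.
    have lk := lip (theta k.+1 w) (theta k w).
    have rv := enormB_rev (Gk k.+1) (Gk k).
    have q0 : 0 <= LPsi * alpha k by rewrite mulr_ge0 // ltW.
    have hh : enorm (Gk k.+1) <= enorm (Gk k) + LPsi * alpha k * (enorm (Gk k) + enorm (Ek k)).
      have := ler_norm (enorm (Gk k.+1) - enorm (Gk k)).
      have := ler_wpM2l L0 h2.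
      rewrite /Gk in rv *. lra.
    have := @sq_var _ (enorm (Gk k)) (enorm (Gk k.+1)) (enorm (Ek k)) (LPsi * alpha k)
      (enorm_ge0 _) (enorm_ge0 _) (enorm_ge0 _) q0 (smallk k).1 hh.
    lra.
  - by exists Y.
  - by rewrite exprn_gt0.
exists K => // m /= Km.
rewrite sub0r normrN; apply: le_lt_trans (mxnorm_le_enorm _) _.
apply: lt_sq; [exact: enorm_ge0 | exact: ltW | exact: hK].
Qed.
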